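(* Let $V$ be an amenable collection of vectors subordinate to a $\mathbb{Q}$-nef partition $E_1,\dots,E_{k+1}$ of a complete fan $\Sigma$ with functions $\varphi_1,\dots,\varphi_{k+1}$, and let $C$ be a minimal cone of $\Sigma$ such that $C\cap M_V$ is $1$-dimensional. Assume either (1) the divisor $D_{k+1}=\sum_{\rho\in E_{k+1}}D_\rho$ is Cartier, or (2) all divisors $D_i=\sum_{\rho\in E_i}D_\rho$, $1\le i\le k$, are Cartier. Then the point $\rho\in C\cap M_V\cap M$ with $\varphi_{k+1}(\rho)=1$ is a primitive lattice point, i.e. the primitive lattice generator of the ray $C\cap M_V$ satisfies $\varphi_{k+1}=1$.
   Context: $M$ lattice of rank $n$, $N=\mathrm{Hom}(M,\mathbb{Z})$; $\Sigma$ complete fan of strictly convex rational cones in $M_\mathbb{R}$ with toric variety $Y_\Sigma$, $\Sigma[1]$ primitive ray generators, $D_\rho$ torus-invariant prime divisors. $\mathbb{Q}$-nef partition: ordered partition $\Sigma[1]=E_1\sqcup\dots\sqcup E_{k+1}$ with convex functions $\varphi_i(v)=\max_C\langle u_{i,C},v\rangle$ ($u_{i,C}\in N\otimes\mathbb{Q}$), linear on each cone, $\varphi_i(\rho)=\delta_{ij}$ for $\rho\in E_j$; $D_i$ is Cartier iff $\varphi_i$ takes integer values on $M$. Amenable collection: $V=\{v_1,\dots,v_k\}\subset N$ with $\langle v_i,\rho\rangle=-1$ on $E_i$, $\ge0$ on $E_j$ for $i<j\le k+1$, $=0$ on $E_j$ for $j<i$. $M_V=\{u\in M_\mathbb{R}:\langle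 v_i,u\rangle=0\ \forall i\}$. *)

(* Defs.v *)
(* M = N = Z^n inside Q^n, dual pairing = dot product. *)
From HB Require Import structures.
From mathcomp Require Import all_boot all_order all_algebra.
Set Implicit Arguments. Unset Strict Implicit. Unset Printing Implicit Defensive.
Import Order.TTheory GRing.Theory Num.Theory.
Local Open Scope ring_scope.

Definition pairing (n : nat) (u x : 'rV[rat]_n) : rat := \sum_(j < n) u 0 j * x 0 j.

Definition lattice_pt (n : nat) (x : 'rV[rat]_n) : Prop :=
  forall j, x 0 j \is a Num.int.

Definition primitive (n : nat) (x : 'rV[rat]_n) : Prop :=
  [/\ lattice_pt x, x != 0 &
      forall (w : 'rV[rat]_n) (m : nat), lattice_pt w -> x = m%:R *: w -> m = 1%N].

Definition in_cone (n : nat) (I : finType) (ray : I -> 'rV[rat]_n) (S : {set I})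
  (x : 'rV[rat]_n) : Prop :=
  exists lam : I -> rat, (forall i, 0 <= lam i) /\ x = \sum_(i in S) lam i *: ray i.

Definition is_face (n : nat) (I : finType) (ray : I -> 'rV[rat]_n) (F S : {set I}) : Prop :=
  exists u : 'rV[rat]_n,
    (forall i, i \in S -> 0 <= pairing u (ray i)) /\
    F = [set i in S | pairing u (ray i) == 0].

Definition strictly_convex (n : nat) (I : finType) (ray : I -> 'rV[rat]_n) (S : {set I}) : Prop :=
  forall x, in_cone ray S x -> in_cone ray S (- x) -> x = 0.

(* Sigma is a fan of strictly convex rational cones whose set of rays
   Sigma[1] is exactly {ray i | i : I}, each ray i being primitive; each cone
   of Sigma is recorded by its set of rays. *)
Definition is_fan (n : nat) (I : finType) (ray : I -> 'rV[rat]_n) (Sigma : {set {set I}}) : Prop :=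
  [/\ (forall i, primitive (ray i)) /\ (forall i, [set i] \in Sigma),
      (forall S, S \in Sigma -> strictly_convex ray S),
      (forall S i, S \in Sigma -> i \in S -> is_face ray [set i] S),
      (forall S F, S \in Sigma -> is_face ray F S -> F \in Sigma) &
      (forall S T, S \in Sigma -> T \in Sigma ->
         is_face ray (S :&: T) S /\
         (forall x, in_cone ray S x -> in_cone ray T x -> in_cone ray (S :&: T) x))].

Definition complete_fan (n : nat) (I : finType) (ray : I -> 'rV[rat]_n) (Sigma : {set {set I}}) : Prop :=
  is_fan ray Sigma /\ forall x, exists2 S, S \in Sigma & in_cone ray S x.

(* Q-nef partition: E r = j means ray r lies in E_{j+1} (0-based parts,
   the last part ord_max is E_{k+1}); phi i is E_{i+1}'s function
   phi_i(x) = max_{C in Sigma} <u i C, x>, linear on each cone C (equal to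
   <u i C, _> there), with phi_i(rho) = delta. *)
Definition qnef_partition (n : nat) (I : finType) (ray : I -> 'rV[rat]_n)
  (Sigma : {set {set I}}) (k : nat) (E : I -> 'I_k.+1)
  (u : 'I_k.+1 -> {set I} -> 'rV[rat]_n) (phi : 'I_k.+1 -> 'rV[rat]_n -> rat) : Prop :=
  forall i : 'I_k.+1,
    [/\ (forall x, (forall S, S \in Sigma -> pairing (u i S) x <= phi i x) /\
                   exists2 S, S \in Sigma & phi i x = pairing (u i S) x),
        (forall S x, S \in Sigma -> in_cone ray S x -> phi i x = pairing (u i S) x) &
        (forall r, phi i (ray r) = (E r == i)%:R)].

(* D_i Cartier iff phi_i is integer valued on M *)
Definition cartier (n k : nat) (phi : 'I_k.+1 -> 'rV[rat]_n -> rat) (i : 'I_k.+1) : Prop :=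
  forall x, lattice_pt x -> phi i x \is a Num.int.

(* amenable collection v_1..v_k (0-based: v i pairs with part i) *)
Definition amenable (n : nat) (I : finType) (ray : I -> 'rV[rat]_n) (k : nat)
  (E : I -> 'I_k.+1) (v : 'I_k -> 'rV[rat]_n) : Prop :=
  (forall i, lattice_pt (v i)) /\
  forall (i : 'I_k) (r : I),
    [/\ nat_of_ord (E r) = nat_of_ord i -> pairing (v i) (ray r) = -1,
        (nat_of_ord i < E r)%N -> 0 <= pairing (v i) (ray r) &
        (E r < nat_of_ord i)%N -> pairing (v i) (ray r) = 0].

Definition in_MV (n k : nat) (v : 'I_k -> 'rV[rat]_n) (x : 'rV[rat]_n) : Prop :=
  forall i, pairing (v i) x = 0.

Definition one_dim (n : nat) (P : 'rV[rat]_n -> Prop) : Prop :=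
  exists x, [/\ x != 0, P x & forall y, P y -> exists t : rat, y = t *: x].

(* Main.v *)
Require Import Defs.
From HB Require Import structures.
From mathcomp Require Import all_boot all_order all_algebra.
Set Implicit Arguments. Unset Strict Implicit. Unset Printing Implicit Defensive.
Import Order.TTheory GRing.Theory Num.Theory.
From mathcomp Require Import zify ring.
From Stdlib Require Import Lia.
Local Open Scope ring_scope.

Lemma pairingD n (u x y : 'rV[rat]_n) : pairing u (x + y) = pairing u x + pairing u y.
Proof. by rewrite /pairing -big_split /=; apply: eq_bigr => j _; rewrite mxE mulrDr. Qed.
Lemma pairingZ n (u x : 'rV[rat]_n) a : pairing u (a *: x) = a * pairing u x.
Proof. by rewrite /pairing mulr_sumr; apply: eq_bigr => j _; rewrite mxE mulrCA. Qed.
Lemma pairing0 n (u : 'rV[rat]_n) : pairing u 0 = 0.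
Proof. by rewrite /pairing big1 // => j _; rewrite mxE mulr0. Qed.
Lemma pairingN n (u x : 'rV[rat]_n) : pairing u (- x) = - pairing u x.
Proof. by rewrite -scaleN1r pairingZ mulN1r. Qed.
Lemma pairingB n (u x y : 'rV[rat]_n) : pairing u (x - y) = pairing u x - pairing u y.
Proof. by rewrite pairingD pairingN. Qed.
Lemma pairing_sum n (u : 'rV[rat]_n) (J : finType) (P : pred J) (F : J -> 'rV[rat]_n) :
  pairing u (\sum_(j | P j) F j) = \sum_(j | P j) pairing u (F j).
Proof.
apply: (big_morph (pairing u)); [exact: pairingD| exact: pairing0].
Qed.
Lemma pairing_int n (u x : 'rV[rat]_n) : lattice_pt u -> lattice_pt x -> pairing u x \is a Num.int.
Proof. move=> hu hx; rewrite /pairing; apply: rpred_sum => j _; exact: rpredM. Qed.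
Lemma lattice0 n : lattice_pt (0 : 'rV[rat]_n).
Proof. by move=> j; rewrite mxE. Qed.
Lemma latticeD n (x y : 'rV[rat]_n) : lattice_pt x -> lattice_pt y -> lattice_pt (x + y).
Proof. by move=> hx hy j; rewrite mxE; apply: rpredD. Qed.
Lemma latticeB n (x y : 'rV[rat]_n) : lattice_pt x -> lattice_pt y -> lattice_pt (x - y).
Proof. by move=> hx hy j; rewrite !mxE; apply: rpredB. Qed.
Lemma latticeZ n (x : 'rV[rat]_n) a : a \is a Num.int -> lattice_pt x -> lattice_pt (a *: x).
Proof. by move=> ha hx j; rewrite mxE; apply: rpredM. Qed.
Lemma lattice_sum n (J : finType) (P : pred J) (F : J -> 'rV[rat]_n) :
  (forall j, P j -> lattice_pt (F j)) -> lattice_pt (\sum_(j | P j) F j).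
Proof.
move=> h; apply: (big_ind (@lattice_pt n)); [exact: lattice0|exact: latticeD|exact: h].
Qed.
Lemma in_cone_ray n (I : finType) (ray : I -> 'rV[rat]_n) (S : {set I}) i : i \in S -> in_cone ray S (ray i).
Proof.
move=> hi; exists (fun j => (j == i)%:R); split=> [j|]; first by case: (j == i).
rewrite (bigD1 i) //= eqxx scale1r big1 ?addr0 // => j /andP[_ /negbTE ->]; by rewrite scale0r.
Qed.
Lemma in_cone0 n (I : finType) (ray : I -> 'rV[rat]_n) (S : {set I}) : in_cone ray S 0.
Proof. by exists (fun _ => 0); split=> // ; rewrite big1 // => j _; rewrite scale0r. Qed.
Lemma in_coneD n (I : finType) (ray : I -> 'rV[rat]_n) (S : {set I}) x y :
  in_cone ray S x -> in_cone ray S y -> in_cone ray S (x + y).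
Proof.
move=> [a [ha ->]] [b [hb ->]]; exists (fun j => a j + b j); split=> [j|]; first exact: addr_ge0.
by rewrite -big_split; apply: eq_bigr => j _; rewrite scalerDl.
Qed.
Lemma in_coneZ n (I : finType) (ray : I -> 'rV[rat]_n) (S : {set I}) x t :
  0 <= t -> in_cone ray S x -> in_cone ray S (t *: x).
Proof.
move=> ht [a [ha ->]]; exists (fun j => t * a j); split=> [j|]; first exact: mulr_ge0.
by rewrite scaler_sumr; apply: eq_bigr => j _; rewrite scalerA.
Qed.
Lemma in_cone_sum n (I : finType) (ray : I -> 'rV[rat]_n) (S : {set I}) (J : finType) (P : pred J) F :
  (forall j, P j -> in_cone ray S (F j)) -> in_cone ray S (\sum_(j | P j) F j).
Proof.
move=> h; apply: (big_ind (in_cone ray S)); [exact: in_cone0|exact: in_coneD|exact: h].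
Qed.

Lemma phi_cone n (I : finType) (ray : I -> 'rV[rat]_n) Sigma (k : nat) (E : I -> 'I_k.+1) u phi (S : {set I}) lam x i :
  qnef_partition ray Sigma E u phi -> S \in Sigma -> (forall j, 0 <= lam j) ->
  x = \sum_(j in S) lam j *: ray j ->
  phi i x = \sum_(j in S) lam j * (E j == i)%:R.
Proof.
move=> hq hS hl hx; have [_ hlin hdel] := hq i.
rewrite (hlin S x hS); last by exists lam.
rewrite hx pairing_sum; apply: eq_bigr => j hj.
by rewrite pairingZ -(hlin S (ray j) hS (in_cone_ray ray hj)) hdel.
Qed.
Lemma nosupp n (I : finType) (ray : I -> 'rV[rat]_n) (k : nat) (E : I -> 'I_k.+1) v
  (C : {set I}) lam g (i0 : 'I_k) :
  amenable ray E v -> (forall j, 0 <= lam j) -> g = \sum_(j in C) lam j *: ray j ->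
  in_MV v g ->
  (forall j, j \in C -> 0 < lam j -> nat_of_ord (E j) != i0) ->
  forall j, j \in C -> 0 < lam j -> (i0 < E j)%N -> pairing (v i0) (ray j) = 0.
Proof.
move=> [_ ham] hl hg hmv hno.
have h0 := hmv i0; rewrite hg pairing_sum in h0.
have hpos : forall j, j \in C -> 0 <= pairing (v i0) (lam j *: ray j).
  move=> j hj; rewrite pairingZ; have [hle|hlt] := lerP (lam j) 0.
    have hz : lam j = 0 by apply/eqP; rewrite eq_le hle hl.
    by rewrite hz ?scale0r ?mul0r ?pairing0 ?oppr0.
  have [h1 h2 h3] := ham i0 j.
  case: (ltngtP (E j) i0) => hE.
  - by rewrite h3 // mulr0.
  - by apply: mulr_ge0; [exact: hl| exact: h2].
  - by move: (hno j hj hlt); rewrite hE eqxx.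
move=> j hj hlt hE.
have := (@psumr_eq0P _ _ _ _ hpos h0 j hj); rewrite pairingZ => /eqP; rewrite mulf_eq0.
by rewrite (gt_eqF hlt) /= => /eqP.
Qed.

Lemma exists_top n (I : finType) (ray : I -> 'rV[rat]_n) (k : nat) (E : I -> 'I_k.+1) v
  (C : {set I}) lam g :
  amenable ray E v -> (forall j, 0 <= lam j) -> g = \sum_(j in C) lam j *: ray j ->
  in_MV v g -> g != 0 ->
  exists j, [/\ j \in C, 0 < lam j & E j = ord_max].
Proof.
move=> [_ ham] hl hg hmv hg0.
have [j1 hj1] : exists j, (j \in C) && (0 < lam j).
  apply/existsP; apply: contraNT hg0; rewrite negb_exists => /forallP hall.
  rewrite hg big1 // => j hj; have := hall j; rewrite hj /= => hn.
  have -> : lam j = 0 by apply/eqP; rewrite eq_le (hl j) andbT leNgt.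
  by rewrite scale0r.
have [jm /andP[hjC hjl] hmax] := @arg_maxnP I j1 (fun j => (j \in C) && (0 < lam j)) (fun j => nat_of_ord (E j)) hj1.
case hEm: (E jm == ord_max); first by exists jm; split=> //; apply/eqP.
exfalso.
have hlt : (E jm < k)%N.
  have := ltn_ord (E jm); rewrite ltnS leq_eqVlt => /orP[/eqP h|//].
  have hh : E jm = ord_max by apply: val_inj.
  by move: hEm; rewrite hh eqxx.
pose i := Ordinal hlt.
have h0 := hmv i; rewrite hg pairing_sum in h0.
have hneg : forall j, j \in C -> 0 <= - pairing (v i) (lam j *: ray j).
  move=> j hj; rewrite pairingZ oppr_ge0; have [hle|hlt'] := lerP (lam j) 0.
    have hz : lam j = 0 by apply/eqP; rewrite eq_le hle hl.
    by rewrite hz ?scale0r ?mul0r ?pairing0 ?oppr0.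
  have hle := hmax j; rewrite hj hlt' /= in hle; have := hle isT => {}hle.
  have [h1 h2 h3] := ham i j.
  case: (ltngtP (E j) i) => hE.
  - by rewrite h3 // mulr0.
  - by move: hle; rewrite leqNgt hE.
  - by rewrite h1 // mulrN1 oppr_le0 hl.
have h0' : \sum_(j in C) - pairing (v i) (lam j *: ray j) = 0 by rewrite sumrN h0 oppr0.
have := (@psumr_eq0P _ _ _ _ hneg h0' jm hjC); rewrite pairingZ.
have [h1 _ _] := ham i jm; rewrite h1 // mulrN1 opprK => /eqP.
by rewrite (gt_eqF hjl).
Qed.
Lemma construct n (I : finType) (ray : I -> 'rV[rat]_n) (k : nat) (E : I -> 'I_k.+1) v
  (C : {set I}) lam g (q0 : I) :
  amenable ray E v -> (forall j, lattice_pt (ray j)) ->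
  (forall j, 0 <= lam j) -> g = \sum_(j in C) lam j *: ray j ->
  in_MV v g -> q0 \in C -> 0 < lam q0 -> E q0 = ord_max ->
  forall d, (d <= k)%N -> exists c : 'I_k -> rat, exists r : 'I_k -> I,
   [/\ forall i, c i \is a Num.int /\ 0 <= c i,
       forall i, c i != 0 -> [/\ r i \in C, 0 < lam (r i) & nat_of_ord (E (r i)) = i],
       forall i : 'I_k, (i < k - d)%N -> c i = 0 &
       forall j : 'I_k, (k - d <= j)%N ->
         pairing (v j) (ray q0 + \sum_i c i *: ray (r i)) = 0].
Proof.
move=> ham hlat hl hg hmv hq0C hq0l hq0E.
have [hvlat hamr] := ham.
elim=> [_|d IH hd].
  exists (fun _ => 0), (fun _ => q0); split.
  - by move=> i; split.
  - by move=> i; rewrite eqxx.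
  - by [].
  - by move=> j; rewrite subn0 leqNgt ltn_ord.
have hdk : (d <= k)%N by apply: ltnW.
have [c [r [hc hcr hc0 hv]]] := IH hdk.
have hi0 : (k - d.+1 < k)%N by lia.
pose i0 := Ordinal hi0.
set y := ray q0 + \sum_i c i *: ray (r i).
have hy : forall j, pairing (v j) y =
    pairing (v j) (ray q0) + \sum_i c i * pairing (v j) (ray (r i)).
  by move=> j; rewrite /y pairingD pairing_sum; congr (_ + _); apply: eq_bigr => i _; rewrite pairingZ.
have hylat : lattice_pt y.
  apply: latticeD => //; apply: lattice_sum => i _; apply: latticeZ => //; exact: (hc i).1.
pose s := pairing (v i0) y.
have hsint : s \is a Num.int by apply: pairing_int.
have hsge : 0 <= s.
  rewrite /s hy; apply: addr_ge0.
    have [_ h2 _] := hamr i0 q0; apply: h2; rewrite hq0E /=; lia.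
  apply: sumr_ge0 => i _; have [hz|hnz] := eqVneq (c i) 0; first by rewrite hz mul0r.
  have [_ _ hE] := hcr i hnz; apply: mulr_ge0; first exact: (hc i).2.
  have [_ h2 _] := hamr i0 (r i); apply: h2; rewrite hE /=.
  have : ~~ (i < k - d)%N by apply/negP => /hc0 /eqP; rewrite (negbTE hnz).
  lia.
have [hs0|hsn0] := eqVneq s 0.
  exists c, r; split => //.
    by move=> i hi; apply: hc0; lia.
  move=> j hj; have [hj'|hj'] := leqP (k - d) j; first exact: hv.
  have -> : j = i0 by apply: val_inj => /=; lia.
  exact: hs0.
have [q [hqC hql hqE]] : exists q, [/\ q \in C, 0 < lam q & nat_of_ord (E q) = i0].
  case hex: [exists q, [&& q \in C, 0 < lam q & nat_of_ord (E q) == i0]].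
    by move: hex => /existsP [q /and3P[h1 h2 /eqP h3]]; exists q.
  exfalso; move/negP: hsn0; apply; apply/eqP.
  have hno : forall j, j \in C -> 0 < lam j -> nat_of_ord (E j) != i0.
    move=> j hj hlj; apply/negP => hE.
    suff : [exists q, [&& q \in C, 0 < lam q & nat_of_ord (E q) == i0]] by rewrite hex.
    apply/existsP.
    by exists j; rewrite hj hlj hE.
  have hz := nosupp ham hl hg hmv hno.
  rewrite /s hy hz //; last by rewrite hq0E /=; lia.
  rewrite add0r big1 // => i _; have [->|hnz] := eqVneq (c i) 0; first by rewrite mul0r.
  have [h1 h2 h3] := hcr i hnz; rewrite hz ?mulr0 // h3.
  have : ~~ (i < k - d)%N by apply/negP => /hc0 /eqP; rewrite (negbTE hnz).
  rewrite /=; lia.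
exists (fun i => if i == i0 then s else c i), (fun i => if i == i0 then q else r i).
have hci0 : c i0 = 0 by apply: hc0 => /=; lia.
have hsum : \sum_i (if i == i0 then s else c i) *: ray (if i == i0 then q else r i)
    = \sum_i c i *: ray (r i) + s *: ray q.
  rewrite (bigD1 i0) // [in RHS](bigD1 i0) //= !eqxx hci0 scale0r add0r [RHS]addrC.
  congr (_ + _); apply: eq_bigr => i hi; by rewrite (negbTE hi).
split.
- by move=> i; case: (i == i0) => //; split.
- move=> i; have [-> _|hne] := eqVneq i i0; first by split.
  exact: hcr.
- move=> i hi; have [hii|hne] := eqVneq i i0; first by exfalso; move: hi; rewrite hii /=; lia.
  by apply: hc0; lia.
- move=> j hj; rewrite hsum addrA pairingD pairingZ -/y.
  have [hj'|hj'] := leqP (k - d) j.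
    rewrite hv // add0r; have [_ _ h3] := hamr j q; rewrite h3 ?mulr0 //; rewrite hqE /=; lia.
  have -> : j = i0 by apply: val_inj => /=; lia.
  have [h1 _ _] := hamr i0 q; rewrite h1 // mulrN1 -/s subrr //.
Qed.
Lemma prim_scale n (p y : 'rV[rat]_n) (s : rat) :
  primitive p -> primitive y -> p = s *: y -> 0 < s -> s = 1.
Proof.
move=> [hpl hp0 hpm] [hyl hy0 hym] hps hs.
set a := numq s; set b := denq s.
have ha : 0 < a by rewrite /a numq_gt0.
have hb : 0 < b by rewrite /b denq_gt0.
have hab : coprimez a b by rewrite /coprimez; exact: coprime_num_den.
have hsab : s = a%:~R / b%:~R by rewrite /a /b divq_num_den.
have hb0 : (b%:~R : rat) != 0 by rewrite intr_eq0 gt_eqF.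
have ha0 : (a%:~R : rat) != 0 by rewrite intr_eq0 gt_eqF.
have key : forall j, exists P Y : int, [/\ p 0 j = P%:~R, y 0 j = Y%:~R & b * P = a * Y].
  move=> j; have /intrP[P hP] := hpl j; have /intrP[Y hY] := hyl j.
  exists P, Y; split => //; apply: (@intr_inj rat).
  have : p 0 j = s * y 0 j by rewrite hps mxE.
  rewrite hP hY hsab !intrM => ->; field; exact: hb0.
have ha1 : a = 1.
  pose w := (a%:~R)^-1 *: p.
  have hwl : lattice_pt w.
    move=> j; have [P [Y [hP hY hbP]]] := key j.
    have hdv : (a %| P)%Z by rewrite -(Gauss_dvdzr _ hab) hbP dvdz_mulr.
    rewrite /w mxE hP; move: hdv; rewrite dvdz_eq => /eqP <-.
    by rewrite intrM mulrCA mulVf // mulr1 intr_int.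
  have hm : p = (`|a|%N)%:R *: w.
    have -> : ((`|a|%N)%:R : rat) = a%:~R by rewrite -[in RHS](gtz0_abs ha).
    by rewrite /w scalerA mulfV // scale1r.
  have := hpm w `|a|%N hwl hm => h.
  by rewrite -(gtz0_abs ha) h.
have hyp : y = b%:~R *: p.
  rewrite hps scalerA hsab ha1 mul1r mulfV // scale1r //.
have hb1 : b = 1.
  have hm : y = (`|b|%N)%:R *: p.
    have -> : ((`|b|%N)%:R : rat) = b%:~R by rewrite -[in RHS](gtz0_abs hb).
    exact: hyp.
  have := hym p `|b|%N hpl hm => h.
  by rewrite -(gtz0_abs hb) h.
by rewrite hsab ha1 hb1 divr1.
Qed.
Theorem proposition2p13 (n : nat) (I : finType) (ray : I -> 'rV[rat]_n)
  (Sigma : {set {set I}}) (k : nat) (E : I -> 'I_k.+1)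
  (u : 'I_k.+1 -> {set I} -> 'rV[rat]_n) (phi : 'I_k.+1 -> 'rV[rat]_n -> rat)
  (v : 'I_k -> 'rV[rat]_n) (C : {set I}) :
  complete_fan ray Sigma ->
  qnef_partition ray Sigma E u phi ->
  amenable ray E v ->
  C \in Sigma ->
  one_dim (fun x => in_cone ray C x /\ in_MV v x) ->
  (forall T, T \in Sigma -> T \proper C ->
     ~ one_dim (fun x => in_cone ray T x /\ in_MV v x)) ->
  (cartier phi ord_max \/ (forall i : 'I_k.+1, i != ord_max -> cartier phi i)) ->
  (forall x, in_cone ray C x -> in_MV v x -> lattice_pt x ->
     phi ord_max x = 1 -> primitive x) /\
  (forall p, in_cone ray C p -> in_MV v p -> primitive p -> phi ord_max p = 1).
Proof.
move=> [hfan _] hq ham hC [g [hg0 [hgC hgMV] hgall]] _ hcart.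
have [[hprim _] _ _ _ _] := hfan.
have hraylat : forall i, lattice_pt (ray i) by move=> i; have [] := hprim i.
have [lam [hl hgl]] := hgC.
have [q0 [hq0C hq0l hq0E]] := exists_top ham hl hgl hgMV hg0.
have [c [r [hc hcr _ hv]]] := construct ham hraylat hl hgl hgMV hq0C hq0l hq0E (leqnn k).
set y := ray q0 + \sum_i c i *: ray (r i).
have hyMV : in_MV v y by move=> j; apply: hv; rewrite subnn.
have hyC : in_cone ray C y.
  apply: in_coneD; first exact: in_cone_ray.
  apply: in_cone_sum => i _; have [->|hnz] := eqVneq (c i) 0.
    by rewrite scale0r; exact: in_cone0.
  have [h1 _ _] := hcr i hnz; apply: in_coneZ; first exact: (hc i).2.
  exact: in_cone_ray.
have hylat : lattice_pt y.
  apply: latticeD => //; apply: lattice_sum => i _; apply: latticeZ => //; exact: (hc i).1.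
have hlin : forall i x, in_cone ray C x -> phi i x = pairing (u i C) x.
  by move=> i x hx; have [_ h _] := hq i; exact: h.
have hpu : forall i j, j \in C -> pairing (u i C) (ray j) = (E j == i)%:R.
  by move=> i j hj; have [_ h h'] := hq i; rewrite -h' (h C) //; exact: in_cone_ray.
have hphiy : forall i, phi i y = (E q0 == i)%:R + \sum_j c j * (E (r j) == i)%:R.
  move=> i; rewrite hlin // pairingD pairing_sum hpu //; congr (_ + _).
  apply: eq_bigr => j _; rewrite pairingZ; have [->|hnz] := eqVneq (c j) 0; first by rewrite !mul0r.
  by have [h1 _ _] := hcr j hnz; rewrite hpu.
have hphiym : phi ord_max y = 1.
  rewrite hphiy hq0E eqxx big1 ?addr0 // => j _.
  have [->|hnz] := eqVneq (c j) 0; first by rewrite mul0r.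
  have [_ _ h3] := hcr j hnz.
  have -> : (E (r j) == ord_max) = false.
    by apply/negbTE; apply/eqP => hh; have := ltn_ord j; rewrite -h3 hh /= ltnn.
  by rewrite mulr0.
have hphiyj : forall (i : 'I_k.+1) (j : 'I_k), nat_of_ord i = j -> phi i y = c j.
  move=> i j hij; rewrite hphiy.
  have -> : (E q0 == i) = false.
    by apply/negbTE; apply/eqP => hh; have := ltn_ord j; rewrite -hij -hh hq0E /= ltnn.
  rewrite add0r (bigD1 j) //= big1 ?addr0.
    have [->|hnz] := eqVneq (c j) 0; first by rewrite mul0r.
    have [_ _ h3] := hcr j hnz.
    have -> : E (r j) == i by apply/eqP; apply: val_inj => /=; rewrite h3 hij.
    by rewrite mulr1.
  move=> j' hj'; have [->|hnz] := eqVneq (c j') 0; first by rewrite mul0r.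
  have [_ _ h3] := hcr j' hnz.
  have -> : (E (r j') == i) = false.
    apply/negbTE; apply/eqP => hh; rewrite -hh h3 in hij.
    by move/eqP: hj'; apply; apply: val_inj.
  by rewrite mulr0.
have hy0 : y != 0.
  by apply/eqP => hy; move: hphiym; rewrite hlin // hy pairing0 => /eqP; rewrite eq_sym oner_eq0.
have hmul : forall x, in_cone ray C x -> in_MV v x -> exists t, x = t *: y.
  move=> x hx hxm; have [tx hxg] := hgall x (conj hx hxm).
  have [ty hyg] := hgall y (conj hyC hyMV).
  have hty : ty != 0 by apply: contraNneq hy0 => h; rewrite hyg h scale0r.
  by exists (tx / ty); rewrite hyg scalerA mulfVK.
have hphit : forall x t, in_cone ray C x -> x = t *: y -> phi ord_max x = t.
  move=> x t hx hxt; rewrite (hlin _ x hx) hxt pairingZ -hlin // hphiym mulr1 //.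
have partA : forall x, in_cone ray C x -> in_MV v x -> lattice_pt x ->
    phi ord_max x = 1 -> primitive x.
  move=> x hx hxm hxl hx1.
  have [t hxt] := hmul x hx hxm.
  have ht1 : t = 1 by rewrite -(hphit x t hx hxt).
  have hxy : x = y by rewrite hxt ht1 scale1r.
  have hx0 : x != 0 by rewrite hxy.
  split => // w m hw hxw.
  have hm0 : m != 0%N by apply: contraNneq hx0 => hm; rewrite hxw hm scale0r.
  have hwx : w = (m%:R)^-1 *: x by rewrite hxw scalerA mulVf ?scale1r // pnatr_eq0.
  have hwC : in_cone ray C w by rewrite hwx; apply: in_coneZ => //; rewrite invr_ge0 ler0n.
  have hphim : forall i, phi i x = m%:R * phi i w.
    by move=> i; rewrite (hlin i x hx) hxw pairingZ -(hlin i w hwC).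
  case: hcart => [hc1|hc2].
    have /intrP[z hz] := hc1 w hw.
    have := hphim ord_max; rewrite hx1 hz => h.
    have hmz : (m%:Z * z = 1)%R.
      by apply: (@intr_inj rat); rewrite intrM rmorph1 [RHS]h.
    by have := congr1 absz hmz; rewrite abszM /= => /eqP; rewrite muln_eq1 => /andP[/eqP -> _].
  pose wi (j : 'I_k) := widen_ord (leqnSn k) j.
  have hwi : forall j, wi j != ord_max.
    by move=> j; apply/eqP => hh; have := ltn_ord j; rewrite -[X in (X < _)%N]/(nat_of_ord (wi j)) hh /= ltnn.
  pose w' := w - \sum_j phi (wi j) w *: ray (r j).
  have hcj : forall j, c j = m%:R * phi (wi j) w.
    by move=> j; rewrite -(hphiyj (wi j) j erefl) -hxy hphim.
  have hq0 : ray q0 = m%:R *: w'.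
    rewrite /w' scalerBr -hxw scaler_sumr hxy /y.
    have -> : \sum_j m%:R *: (phi (wi j) w *: ray (r j)) = \sum_i c i *: ray (r i).
      by apply: eq_bigr => j _; rewrite scalerA hcj.
    by rewrite addrK.
  have hw'l : lattice_pt w'.
    apply: latticeB => //; apply: lattice_sum => j _; apply: latticeZ => //.
    exact: (hc2 (wi j) (hwi j) w hw).
  have [_ _ hprimq] := hprim q0.
  exact: hprimq w' m hw'l hq0.
split => // p hp hpm hpp.
have [t hpt] := hmul p hp hpm.
rewrite (hphit p t hp hpt).
have hyp : primitive y := partA y hyC hyMV hylat hphiym.
apply: (prim_scale hpp hyp hpt).
have [_ hp0 _] := hpp.
rewrite lt_def; apply/andP; split.
  by apply: contraNneq hp0 => ht; rewrite hpt ht scale0r.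
have [lp [hlp hpl]] := hp.
have := phi_cone ord_max hq hC hlp hpl; rewrite (hphit p t hp hpt) => ->.
by apply: sumr_ge0 => j _; apply: mulr_ge0.
Qed.
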